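(* There exist a joint distribution $P$ of $(x,a,y)$ with two protected groups $a\in\{1,2\}$ and binary labels $y\in\{0,1\}$, a score function $\mathcal{R}(x,a)\in\mathbb{R}$, and a choice of bias measure $\mathcal{B}$ (demographic parity or equal opportunity) such that the post-processing method (described in the context), with loss $\mathcal{L}$ equal to the misclassification rate, is not slack-consistent: there is an individual $(x,a)$ and slacks $0<\beta_1<\beta_2<\beta_3$ such that the values $f_{\beta_1}(x,a), f_{\beta_2}(x,a), f_{\beta_3}(x,a)$ are neither non-decreasing nor non-increasing.
   Context: Setting: individuals are pairs $(x,a)$ with features $x$ and group $a\in\{1,2\}$, label $y\in\{0,1\}$, all distributed according to $P$. A (possibly stochastic) classifier $f$ assigns to each $(x,a)$ a probability $f(x,a)\in[0,1]$ of a positive prediction. Demographic-parity bias: $\mathcal{B}(f)=E[f(x,a)\mid a=1]-E[f(x,a)\mid a=2]$. Equal-opportunity bias: $\mathcal{B}(f)=E[f(x,a)\mid a=1,y=1]-E[f(x,a)\mid a=2,y=1]$. Misclassification loss: $\mathcal{L}(f)=P(\text{prediction}\neq y)$ where the prediction is drawn positive with probability $f(x,a)$. Normalized thresholds: for a score function $\mathcal{R}$ and group $a$, a normalized threshold $\tau\in[0,1]$ denotes a (possibly randomized) threshold classifier on $\mathcal{R}(x,a)$ within group $a$, given by a randomization over at most two adjacent deterministic thresholds, whose positive prediction rate in group $a$ equals $1-\tau$. A pair $(\tau_1,\tau_2)$ thus defines a classifier (group $a$ uses $\tau_a$), and $\mathcal{L}(\tau_1,\tau_2)$, $\mathcal{B}(\tau_1,\tau_2)$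 denote its loss and bias. Post-processing method with slack $\beta>0$: among all $(\tau_1,\tau_2)\in[0,1]^2$ minimizing $\mathcal{L}(\tau_1,\tau_2)$ subject to $|\mathcal{B}(\tau_1,\tau_2)|\le\beta$, keep those with smallest $|\mathcal{B}|$; among those keep those with smallest $\tau_1$; among those return the one with smallest $\tau_2$. The resulting classifier is denoted $f_\beta$. Slack-consistency: a procedure producing $f_\beta$ for each slack $\beta>0$ is slack-consistent if for every individual $(x,a)$ the map $\beta\mapsto f_\beta(x,a)$ is monotonic (for all $\beta_1<\beta_2<\beta_3$, either $f_{\beta_1}(x,a)\le f_{\beta_2}(x,a)\le f_{\beta_3}(x,a)$ or $f_{\beta_1}(x,a)\ge f_{\beta_2}(x,a)\ge f_{\beta_3}(x,a)$). *)

(* Defs.v *)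
From HB Require Import structures.
From mathcomp Require Import all_boot all_order all_algebra.
From mathcomp Require Import Rstruct.
Set Implicit Arguments. Unset Strict Implicit. Unset Printing Implicit Defensive.
Import Order.TTheory GRing.Theory Num.Theory.
Local Open Scope ring_scope.

Notation R := Rdefinitions.R.

Inductive grp := G1 | G2.

Inductive bias_kind := DemParity | EqOpp.

Section Fairness.
Variable X : finType.
Variable p : X -> grp -> bool -> R.
Variable sc : X -> grp -> R.

Definition is_distribution : Prop :=
  (forall x a y, 0 <= p x a y) /\
  \sum_(x : X) (p x G1 false + p x G1 true + p x G2 false + p x G2 true) = 1.

Definition pxa (x : X) (a : grp) : R := p x a false + p x a true.
Definition mass (a : grp) : R := \sum_(x : X) pxa x a.
Definition massY (a : grp) : R := \sum_(x : X) p x a true.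

Definition prob_gt (a : grp) (r : R) : R :=
  (\sum_(x : X | r < sc x a) pxa x a) / mass a.
Definition prob_eq (a : grp) (r : R) : R :=
  (\sum_(x : X | sc x a == r) pxa x a) / mass a.

(* Normalized threshold tau in group a: the randomized threshold classifier on
   the score whose positive rate in group a is 1 - tau. *)
Definition thr (a : grp) (tau : R) (x : X) : R :=
  let r := sc x a in
  let G := prob_gt a r in
  let E := prob_eq a r in
  if 1 - tau <= G then 0
  else if G + E <= 1 - tau then 1
  else ((1 - tau) - G) / E.

Definition clf (tau1 tau2 : R) (x : X) (a : grp) : R :=
  thr a (if a is G1 then tau1 else tau2) x.

Definition E_a (f : X -> grp -> R) (a : grp) : R :=
  (\sum_(x : X) f x a * pxa x a) / mass a.
Definition E_ay1 (f : X -> grp -> R) (a : grp) : R :=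
  (\sum_(x : X) f x a * p x a true) / massY a.

Definition bias (k : bias_kind) (f : X -> grp -> R) : R :=
  match k with
  | DemParity => E_a f G1 - E_a f G2
  | EqOpp => E_ay1 f G1 - E_ay1 f G2
  end.

Definition bias_well_defined (k : bias_kind) : Prop :=
  match k with
  | DemParity => 0 < mass G1 /\ 0 < mass G2
  | EqOpp => 0 < massY G1 /\ 0 < massY G2
  end.

Definition loss (f : X -> grp -> R) : R :=
  \sum_(x : X) (f x G1 * p x G1 false + (1 - f x G1) * p x G1 true
              + f x G2 * p x G2 false + (1 - f x G2) * p x G2 true).

Definition Lt (k : bias_kind) (tau1 tau2 : R) := loss (clf tau1 tau2).
Definition Bt (k : bias_kind) (tau1 tau2 : R) := bias k (clf tau1 tau2).

Definition in01 (t : R) : Prop := 0 <= t <= 1.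

(* The post-processing method with slack beta, as successive selections. *)
Definition feasible (k : bias_kind) (beta t1 t2 : R) : Prop :=
  in01 t1 /\ in01 t2 /\ `|Bt k t1 t2| <= beta.

Definition loss_optimal (k : bias_kind) (beta t1 t2 : R) : Prop :=
  feasible k beta t1 t2 /\
  forall u1 u2, feasible k beta u1 u2 -> Lt k t1 t2 <= Lt k u1 u2.

Definition bias_minimal (k : bias_kind) (beta t1 t2 : R) : Prop :=
  loss_optimal k beta t1 t2 /\
  forall u1 u2, loss_optimal k beta u1 u2 -> `|Bt k t1 t2| <= `|Bt k u1 u2|.

Definition tau1_minimal (k : bias_kind) (beta t1 t2 : R) : Prop :=
  bias_minimal k beta t1 t2 /\
  forall u1 u2, bias_minimal k beta u1 u2 -> t1 <= u1.

Definition selected (k : bias_kind) (beta t1 t2 : R) : Prop :=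
  tau1_minimal k beta t1 t2 /\
  forall u1 u2, tau1_minimal k beta u1 u2 -> t2 <= u2.

End Fairness.

(* Main.v *)
Require Import Defs.
From HB Require Import structures.
From mathcomp Require Import all_boot all_order all_algebra.
From mathcomp Require Import Rstruct.
From mathcomp Require Import lra.
Import Order.TTheory GRing.Theory Num.Theory.
Local Open Scope ring_scope.

Definition pp (x : bool) (a : grp) (y : bool) : R :=
  match a, x, y with
  | G1, true, false => 0 | G1, true, true => 1/7
  | G1, false, false => 1/7 | G1, false, true => 2/7
  | G2, true, false => 2/7 | G2, true, true => 0
  | G2, false, false => 0 | G2, false, true => 1/7 end.
Definition ss (x : bool) (a : grp) : R := if x then 1 else 0.

Lemma mass1 : mass pp G1 = 4/7.
Proof. rewrite /mass big_bool /pxa /=. lra. Qed.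
Lemma mass2 : mass pp G2 = 3/7.
Proof. rewrite /mass big_bool /pxa /=. lra. Qed.

Ltac comp := rewrite ?/prob_gt ?/prob_eq big_mkcond big_bool /= ?ltxx ?ltr10 ?ltr01 ?eqxx ?(eq_sym 0) ?oner_eq0 ?(eq_sym 1) ?oner_eq0 /= ?mass1 ?mass2 /pxa /=; lra.

Lemma gt1H : prob_gt pp ss G1 1 = 0. Proof. comp. Qed.
Lemma eq1H : prob_eq pp ss G1 1 = 1/4. Proof. comp. Qed.
Lemma gt1L : prob_gt pp ss G1 0 = 1/4. Proof. comp. Qed.
Lemma eq1L : prob_eq pp ss G1 0 = 3/4. Proof. comp. Qed.
Lemma gt2H : prob_gt pp ss G2 1 = 0. Proof. comp. Qed.
Lemma eq2H : prob_eq pp ss G2 1 = 2/3. Proof. comp. Qed.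
Lemma gt2L : prob_gt pp ss G2 0 = 2/3. Proof. comp. Qed.
Lemma eq2L : prob_eq pp ss G2 0 = 1/3. Proof. comp. Qed.

Lemma thr_spec a t x G E :
  prob_gt pp ss a (ss x a) = G -> prob_eq pp ss a (ss x a) = E ->
  let f := thr pp ss a t x in
  (1 - t <= G /\ f = 0) \/ (G + E <= 1 - t /\ f = 1) \/
  (G < 1 - t < G + E /\ f = (1 - t - G) / E).
Proof.
move=> hG hE f; rewrite /f /thr hG hE.
case: ifP => h1; first by left.
case: ifP => h2; first by right; left.
right; right; split => //.
move/negbT: h1; move/negbT: h2; rewrite -!ltNge => -> -> //.
Qed.

Lemma s1H t : let f := thr pp ss G1 t true in
  (1 - t <= 0 /\ f = 0) \/ (1/4 <= 1 - t /\ f = 1) \/ (0 < 1 - t < 1/4 /\ f = 4 * (1 - t)).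
Proof.
move=> f; have := @thr_spec G1 t true _ _ gt1H eq1H.
rewrite /= -/f => -[[h1 h2]|[[h1 h2]|[h1 h2]]].
- by left.
- right; left; split=> //; lra.
- right; right; rewrite h2; split; [lra|]. lra.
Qed.


Lemma grp1 t : 0 <= t <= 1 ->
  (1 - t <= 1/4 /\ thr pp ss G1 t true = 4 * (1 - t) /\ thr pp ss G1 t false = 0) \/
  (1/4 <= 1 - t /\ thr pp ss G1 t true = 1 /\ thr pp ss G1 t false = (4 * (1 - t) - 1) / 3).
Proof.
move=> /andP[h1 h2].
have := (@thr_spec G1 t true _ _ gt1H eq1H); have := (@thr_spec G1 t false _ _ gt1L eq1L).
move=> /= [[? ->]|[[? ->]|[? ->]]] [[? ->]|[[? ->]|[? ->]]];
  first [by left; split; [lra|split; lra] | by right; split; [lra|split; lra] | exfalso; lra].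
Qed.

Lemma grp2 t : 0 <= t <= 1 ->
  (1 - t <= 2/3 /\ thr pp ss G2 t true = 3 * (1 - t) / 2 /\ thr pp ss G2 t false = 0) \/
  (2/3 <= 1 - t /\ thr pp ss G2 t true = 1 /\ thr pp ss G2 t false = 3 * (1 - t) - 2).
Proof.
move=> /andP[h1 h2].
have := (@thr_spec G2 t true _ _ gt2H eq2H); have := (@thr_spec G2 t false _ _ gt2L eq2L).
move=> /= [[? ->]|[[? ->]|[? ->]]] [[? ->]|[[? ->]|[? ->]]];
  first [by left; split; [lra|split; lra] | by right; split; [lra|split; lra] | exfalso; lra].
Qed.

Lemma LtE u1 u2 : Lt pp ss DemParity u1 u2 =
  (4 - thr pp ss G1 u1 true - thr pp ss G1 u1 false + 2 * thr pp ss G2 u2 true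
     - thr pp ss G2 u2 false) / 7.
Proof. rewrite /Lt /loss big_bool /clf /=; lra. Qed.

Lemma BtE u1 u2 : Bt pp ss DemParity u1 u2 =
  (thr pp ss G1 u1 true + 3 * thr pp ss G1 u1 false) / 4
  - (2 * thr pp ss G2 u2 true + thr pp ss G2 u2 false) / 3.
Proof. rewrite /Bt /bias /E_a !big_bool /clf /= mass1 mass2 /pxa /=; lra. Qed.

Lemma sel_unique (X : finType) (p : X -> grp -> bool -> R) sc k beta t1 t2 :
  feasible p sc k beta t1 t2 ->
  (forall u1 u2, feasible p sc k beta u1 u2 -> Lt p sc k t1 t2 <= Lt p sc k u1 u2) ->
  (forall u1 u2, feasible p sc k beta u1 u2 ->
     Lt p sc k u1 u2 <= Lt p sc k t1 t2 -> u1 = t1 /\ u2 = t2) ->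
  selected p sc k beta t1 t2.
Proof.
move=> F O U.
have LO : loss_optimal p sc k beta t1 t2 by split.
have LU : forall u1 u2, loss_optimal p sc k beta u1 u2 -> u1 = t1 /\ u2 = t2.
  by move=> u1 u2 [Fu Ou]; apply: U => //; apply: Ou.
have BM : bias_minimal p sc k beta t1 t2.
  split=> // u1 u2 H; have [-> ->] := LU u1 u2 H; exact: lexx.
have TM : tau1_minimal p sc k beta t1 t2.
  split=> // u1 u2 [H _]; have [-> _] := LU u1 u2 H; exact: lexx.
split=> // u1 u2 [[H _] _]; have [_ ->] := LU u1 u2 H; exact: lexx.
Qed.


Lemma opt_gen beta t1 t2 :
  in01 t1 -> in01 t2 -> `|Bt pp ss DemParity t1 t2| <= beta ->
  (forall u1 u2, in01 u1 -> in01 u2 ->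
     - beta <= Bt pp ss DemParity u1 u2 -> Bt pp ss DemParity u1 u2 <= beta ->
     Lt pp ss DemParity t1 t2 <= Lt pp ss DemParity u1 u2 /\
     (Lt pp ss DemParity u1 u2 <= Lt pp ss DemParity t1 t2 -> u1 = t1 /\ u2 = t2)) ->
  selected pp ss DemParity beta t1 t2.
Proof.
move=> i1 i2 hb H.
have K : forall u1 u2, feasible pp ss DemParity beta u1 u2 ->
   Lt pp ss DemParity t1 t2 <= Lt pp ss DemParity u1 u2 /\
   (Lt pp ss DemParity u1 u2 <= Lt pp ss DemParity t1 t2 -> u1 = t1 /\ u2 = t2).
  move=> u1 u2 [j1 [j2 hb']].
  move: hb'; rewrite ler_norml => /andP[hb1 hb2].
  exact: H.
apply: sel_unique.
- by split=> //; split.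
- by move=> u1 u2 /K [].
- by move=> u1 u2 /K [].
Qed.

Lemma in01_0 : in01 0. Proof. by rewrite /in01 lexx ler01. Qed.
Lemma in01_1 : in01 1. Proof. by rewrite /in01 lexx ler01. Qed.
Lemma in01_h : in01 (1/2). Proof. rewrite /in01; apply/andP; split; lra. Qed.

Lemma v1_0 : thr pp ss G1 0 true = 1 /\ thr pp ss G1 0 false = 1.
Proof. case: (grp1 _ in01_0) => [[? [-> ->]]|[? [-> ->]]]; split; lra. Qed.
Lemma v1_h : thr pp ss G1 (1/2) true = 1 /\ thr pp ss G1 (1/2) false = 1/3.
Proof. case: (grp1 _ in01_h) => [[? [-> ->]]|[? [-> ->]]]; split; lra. Qed.
Lemma v2_0 : thr pp ss G2 0 true = 1 /\ thr pp ss G2 0 false = 1.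
Proof. case: (grp2 _ in01_0) => [[? [-> ->]]|[? [-> ->]]]; split; lra. Qed.
Lemma v2_1 : thr pp ss G2 1 true = 0 /\ thr pp ss G2 1 false = 0.
Proof. case: (grp2 _ in01_1) => [[? [-> ->]]|[? [-> ->]]]; split; lra. Qed.

Lemma b1 : selected pp ss DemParity (1/10) 0 0.
Proof.
have [e1 e2] := v1_0; have [e3 e4] := v2_0.
apply: opt_gen; [exact: in01_0 | exact: in01_0 | |].
- rewrite BtE e1 e2 e3 e4 ler_norml; apply/andP; split; lra.
- rewrite LtE e1 e2 e3 e4; move=> u1 u2 j1 j2 hb1 hb2.
  have /andP[? ?] := j1; have /andP[? ?] := j2.
  move: hb1 hb2; rewrite !LtE !BtE.
  case: (grp1 _ j1) => [[? [-> ->]]|[? [-> ->]]];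
  case: (grp2 _ j2) => [[? [-> ->]]|[? [-> ->]]]; move=> ? ?;
  (split; [lra | move=> ?; split; lra]).
Qed.

Lemma b2 : selected pp ss DemParity (1/2) (1/2) 1.
Proof.
have [e1 e2] := v1_h; have [e3 e4] := v2_1.
apply: opt_gen; [exact: in01_h | exact: in01_1 | |].
- rewrite BtE e1 e2 e3 e4 ler_norml; apply/andP; split; lra.
- rewrite LtE e1 e2 e3 e4; move=> u1 u2 j1 j2 hb1 hb2.
  have /andP[? ?] := j1; have /andP[? ?] := j2.
  move: hb1 hb2; rewrite !LtE !BtE.
  case: (grp1 _ j1) => [[? [-> ->]]|[? [-> ->]]];
  case: (grp2 _ j2) => [[? [-> ->]]|[? [-> ->]]]; move=> ? ?;
  (split; [lra | move=> ?; split; lra]).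
Qed.

Lemma b3 : selected pp ss DemParity 1 0 1.
Proof.
have [e1 e2] := v1_0; have [e3 e4] := v2_1.
apply: opt_gen; [exact: in01_0 | exact: in01_1 | |].
- rewrite BtE e1 e2 e3 e4 ler_norml; apply/andP; split; lra.
- rewrite LtE e1 e2 e3 e4; move=> u1 u2 j1 j2 hb1 hb2.
  have /andP[? ?] := j1; have /andP[? ?] := j2.
  move: hb1 hb2; rewrite !LtE !BtE.
  case: (grp1 _ j1) => [[? [-> ->]]|[? [-> ->]]];
  case: (grp2 _ j2) => [[? [-> ->]]|[? [-> ->]]]; move=> ? ?;
  (split; [lra | move=> ?; split; lra]).
Qed.

Theorem theorem1 :
  exists (X : finType) (p : X -> grp -> bool -> R) (sc : X -> grp -> R)
         (k : bias_kind),
    is_distribution p /\ bias_well_defined p k /\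
    exists (x : X) (a : grp) (beta1 beta2 beta3 : R)
           (t11 t12 t21 t22 t31 t32 : R),
      0 < pxa p x a /\
      0 < beta1 /\ beta1 < beta2 /\ beta2 < beta3 /\
      selected p sc k beta1 t11 t12 /\
      selected p sc k beta2 t21 t22 /\
      selected p sc k beta3 t31 t32 /\
      let v1 := clf p sc t11 t12 x a in
      let v2 := clf p sc t21 t22 x a in
      let v3 := clf p sc t31 t32 x a in
      ~ (v1 <= v2 /\ v2 <= v3) /\ ~ (v3 <= v2 /\ v2 <= v1).
Proof.
exists bool, pp, ss, DemParity.
split.
  split; first by move=> x a y; case: x; case: a; case: y => /=; lra.
  rewrite big_bool /=; lra.
split; first by rewrite /bias_well_defined mass1 mass2; split; lra.
exists false, G1, (1/10), (1/2), 1, 0, 0, (1/2), 1, 0, 1.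
split; first by rewrite /pxa /=; lra.
split; first lra.
split; first lra.
split; first lra.
split; first exact: b1.
split; first exact: b2.
split; first exact: b3.
rewrite /= /clf.
have [_ ->] := v1_0; have [_ ->] := v1_h.
split; move=> [h1 h2]; lra.
Qed.
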